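(* There is an absolute constant $c>0$ such that the following holds. Let $q,p$ be positive integers with $q/2<p<2q$, let $W\subseteq\{0,1,\dots,q-1\}$, and let $b_1,b_2$ be integers with $\gcd(b_1,q)=\gcd(b_2,p)=1$. Then $$\sum_{a\in\mathbb{Z},\ |a|<q/2}\left|f_W\left(\frac{b_1a}{q}\right)\right|\,\left|f_W\left(\frac{b_2a}{p}\right)\right|\ \le\ c\, q|W|.$$
   Context: $e(u)=\exp(2\pi i u)$ and, for a finite set of integers $W$, $f_W(t)=\sum_{s\in W}e(st)$. *)

(* Defs.v *)
From Stdlib Require Import Reals Lra Lia ZArith List.
Open Scope R_scope.

(* Real and imaginary parts of f_W(t) = sum_{s in W} e(s t), e(u) = exp(2 pi i u). *)
Definition fW_re (W : list Z) (t : R) : R :=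
  fold_right Rplus 0 (map (fun s => cos (2 * PI * IZR s * t)) W).
Definition fW_im (W : list Z) (t : R) : R :=
  fold_right Rplus 0 (map (fun s => sin (2 * PI * IZR s * t)) W).

Definition abs_fW (W : list Z) (t : R) : R :=
  sqrt (fW_re W t ^ 2 + fW_im W t ^ 2).

Definition range_half (q : Z) : list Z :=
  filter (fun a => (2 * Z.abs a <? q)%Z)
         (map (fun k => (Z.of_nat k - q)%Z) (seq 0 (Z.to_nat (2 * q + 1)))).

Definition corr_sum (W : list Z) (q p b1 b2 : Z) : R :=
  fold_right Rplus 0
    (map (fun a => abs_fW W (IZR (b1 * a) / IZR q) * abs_fW W (IZR (b2 * a) / IZR p))
         (range_half q)).

(* Main.v *)
Require Import Defs.
From Stdlib Require Import Reals ZArith List Lra Lia.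
Open Scope R_scope.

Lemma Zper_gen (f : R -> R) :
  (forall x (k:nat), f (x + 2 * INR k * PI) = f x) ->
  forall x z, f (x + 2 * IZR z * PI) = f x.
Proof.
  intros Hf x z. destruct (Z_le_gt_dec 0 z) as [Hz|Hz].
  - rewrite <- (Z2Nat.id z) by lia. rewrite <- INR_IZR_INZ. apply Hf.
  - replace z with (- Z.of_nat (Z.to_nat (- z)))%Z by lia.
    rewrite opp_IZR, <- INR_IZR_INZ.
    set (n := Z.to_nat (-z)).
    rewrite <- (Hf (x + 2 * - INR n * PI) n). f_equal. ring.
Qed.

Lemma sin_Zper x z : sin (x + 2 * IZR z * PI) = sin x.
Proof. apply Zper_gen. apply sin_period. Qed.
Lemma cos_Zper x z : cos (x + 2 * IZR z * PI) = cos x.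
Proof. apply Zper_gen. apply cos_period. Qed.

Definition lsum {A} (f : A -> R) (l : list A) := fold_right Rplus 0 (map f l).

Lemma lsum_nil {A} (f : A -> R) : lsum f nil = 0.
Proof. reflexivity. Qed.
Lemma lsum_cons {A} (f : A -> R) a l : lsum f (a :: l) = f a + lsum f l.
Proof. reflexivity. Qed.
Lemma lsum_app {A} (f : A -> R) l1 l2 : lsum f (l1 ++ l2) = lsum f l1 + lsum f l2.
Proof. induction l1; [unfold lsum; simpl; ring|]. simpl. rewrite !lsum_cons, IHl1; ring. Qed.
Lemma lsum_ext {A} (f g : A -> R) l : (forall x, In x l -> f x = g x) -> lsum f l = lsum g l.
Proof. induction l; intros H; [reflexivity|]. rewrite !lsum_cons. f_equal. apply H; now left. apply IHl; intros; apply H; now right. Qed.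
Lemma lsum_le {A} (f g : A -> R) l : (forall x, In x l -> f x <= g x) -> lsum f l <= lsum g l.
Proof. induction l; intros H; [unfold lsum; simpl; lra|]. rewrite !lsum_cons.
  apply Rplus_le_compat. apply H; now left. apply IHl; intros; apply H; now right. Qed.
Lemma lsum_nonneg {A} (f : A -> R) l : (forall x, In x l -> 0 <= f x) -> 0 <= lsum f l.
Proof. intros H. replace 0 with (lsum (fun _ => 0) l). apply lsum_le; auto.
  induction l; auto. rewrite lsum_cons, IHl; [ring|]. intros; apply H; now right. Qed.
Lemma lsum_plus {A} (f g : A -> R) l : lsum (fun x => f x + g x) l = lsum f l + lsum g l.
Proof. induction l; [unfold lsum; simpl; ring|]. rewrite !lsum_cons, IHl; ring. Qed.
Lemma lsum_scal {A} (f : A -> R) c l : lsum (fun x => c * f x) l = c * lsum f l.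
Proof. induction l; [unfold lsum; simpl; ring|]. rewrite !lsum_cons, IHl; ring. Qed.
Lemma lsum_map {A B} (f : B -> R) (h : A -> B) l : lsum f (map h l) = lsum (fun x => f (h x)) l.
Proof. unfold lsum. now rewrite map_map. Qed.
Lemma lsum_filter {A} (f : A -> R) P l : (forall x, In x l -> 0 <= f x) -> lsum f (filter P l) <= lsum f l.
Proof. induction l; intros H; simpl; [unfold lsum; simpl; lra|].
  assert (0 <= f a) by (apply H; now left).
  assert (lsum f (filter P l) <= lsum f l) by (apply IHl; intros; apply H; now right).
  destruct (P a); rewrite ?lsum_cons; lra. Qed.
Lemma lsum_mul {A B} (f : A -> R) (g : B -> R) l l' :
  lsum f l * lsum g l' = lsum (fun s => lsum (fun s' => f s * g s') l') l.
Proof. induction l; [unfold lsum; simpl; ring|]. rewrite !lsum_cons, <- IHl, lsum_scal; ring. Qed.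
Lemma lsum_swap {A B} (F : A -> B -> R) l l' :
  lsum (fun a => lsum (fun b => F a b) l') l = lsum (fun b => lsum (fun a => F a b) l) l'.
Proof. induction l; simpl.
  - unfold lsum at 1; simpl. induction l'; [reflexivity|]. rewrite lsum_cons, <- IHl'. unfold lsum; simpl; ring.
  - rewrite lsum_cons, IHl, <- lsum_plus. apply lsum_ext; intros. rewrite lsum_cons; ring. Qed.
Lemma lsum_const {A} c (l : list A) : lsum (fun _ => c) l = c * INR (length l).
Proof. induction l; [unfold lsum; simpl; ring|]. rewrite lsum_cons, IHl. simpl length; rewrite S_INR; ring. Qed.
Lemma lsum_telescope (g : nat -> R) n : lsum (fun k => g (S k) - g k) (seq 0 n) = g n - g 0%nat.
Proof. induction n; [unfold lsum; simpl; ring|].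
  rewrite seq_S, lsum_app, IHn. unfold lsum; simpl. ring. Qed.

Lemma trig_sum (j k0 m : Z) (n : nat) : (0 < m)%Z ->
  lsum (fun k:nat => cos (2*PI*IZR j*(IZR (Z.of_nat k) - IZR k0)/IZR m)) (seq 0 (n * Z.to_nat m))
  = if (j mod m =? 0)%Z then INR (n * Z.to_nat m) else 0.
Proof.
  intros Hm. assert (Hm' : IZR m <> 0) by (apply not_0_IZR; lia).
  destruct (Z.eqb_spec (j mod m) 0) as [Hj|Hj].
  - rewrite (lsum_ext _ (fun _ => 1)). rewrite lsum_const, length_seq; ring.
    intros k _. rewrite (Z_div_mod_eq_full j m), Hj, Z.add_0_r.
    replace (2 * PI * IZR (m * (j / m)) * (IZR (Z.of_nat k) - IZR k0) / IZR m)
      with (0 + 2 * IZR ((j/m) * (Z.of_nat k - k0)) * PI).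
    rewrite cos_Zper. apply cos_0.
    rewrite !mult_IZR, minus_IZR. field. auto.
  - set (a := PI * IZR j / IZR m).
    assert (Ha : sin a <> 0).
    { intros H. apply sin_eq_0_0 in H. destruct H as [K HK]. apply Hj.
      unfold a in HK. assert (IZR j = IZR (K * m)).
      { rewrite mult_IZR. apply (Rmult_eq_reg_l PI). 2: apply PI_neq0.
        apply (Rmult_eq_reg_r (/ IZR m)). 2: now apply Rinv_neq_0_compat.
        unfold Rdiv in HK; rewrite HK. field. auto. }
      apply eq_IZR in H. subst j. apply Z.mod_mul. lia. }
    set (S := lsum _ _).
    set (g := fun k : nat => sin (a * (2 * (INR k - IZR k0) - 1))).
    assert (E : 2 * sin a * S = g (n * Z.to_nat m)%nat - g 0%nat).
    { unfold S. rewrite <- lsum_scal, <- lsum_telescope. apply lsum_ext. intros k _.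
      unfold g. rewrite S_INR, <- INR_IZR_INZ.
      replace (a * (2 * (INR k + 1 - IZR k0) - 1)) with (2 * a * (INR k - IZR k0) + a) by ring.
      replace (a * (2 * (INR k - IZR k0) - 1)) with (2 * a * (INR k - IZR k0) - a) by ring.
      rewrite sin_plus, sin_minus.
      replace (2 * PI * IZR j * (INR k - IZR k0) / IZR m) with (2 * a * (INR k - IZR k0)).
      ring. unfold a. field. auto. }
    assert (E2 : g (n * Z.to_nat m)%nat = g 0%nat).
    { unfold g. rewrite mult_INR, INR_IZR_INZ, (INR_IZR_INZ (Z.to_nat m)), Z2Nat.id by lia.
      replace (a * (2 * (IZR (Z.of_nat n) * IZR m - IZR k0) - 1))
        with (a * (2 * (INR 0 - IZR k0) - 1) + 2 * IZR (j * Z.of_nat n) * PI).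
      apply sin_Zper. rewrite mult_IZR. unfold a. simpl. field. auto. }
    rewrite E2 in E. destruct (Rmult_integral (2 * sin a) S) as [H|H]; [lra| |auto].
    exfalso. apply Ha. lra.
Qed.



Lemma abs_fW_sq W t : abs_fW W t ^ 2 =
  lsum (fun s => lsum (fun s' => cos (2*PI*IZR s*t - 2*PI*IZR s'*t)) W) W.
Proof.
  unfold abs_fW. rewrite pow2_sqrt by (apply Rplus_le_le_0_compat; apply pow2_ge_0).
  change (fW_re W t) with (lsum (fun s => cos (2*PI*IZR s*t)) W).
  change (fW_im W t) with (lsum (fun s => sin (2*PI*IZR s*t)) W).
  rewrite <- !Rsqr_pow2. unfold Rsqr. rewrite !lsum_mul, <- lsum_plus.
  apply lsum_ext; intros s _. rewrite <- lsum_plus. apply lsum_ext; intros s' _.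
  rewrite cos_minus. ring.
Qed.

Lemma factor_eq W (b m k0 : Z) (n : nat) : (0 < m)%Z ->
  lsum (fun k:nat => abs_fW W (IZR (b * (Z.of_nat k - k0)) / IZR m) ^ 2) (seq 0 (n * Z.to_nat m))
  = lsum (fun s => lsum (fun s' => if ((b*(s-s')) mod m =? 0)%Z then INR (n*Z.to_nat m) else 0) W) W.
Proof.
  intros Hm. assert (Hm' : IZR m <> 0) by (apply not_0_IZR; lia).
  rewrite (lsum_ext _ _ _ (fun k _ => abs_fW_sq W _)).
  rewrite lsum_swap. apply lsum_ext; intros s _.
  rewrite lsum_swap. apply lsum_ext; intros s' _.
  rewrite <- (trig_sum (b*(s-s')) k0 m n Hm). apply lsum_ext; intros k _.
  f_equal. rewrite !mult_IZR, !minus_IZR. field. auto.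
Qed.

Lemma range_bound (g : Z -> R) q M : (0 < q)%Z -> (forall x, 0 <= g x) ->
  (Z.to_nat (2*q+1) <= M)%nat ->
  lsum g (range_half q) <= lsum (fun k:nat => g (Z.of_nat k - q)%Z) (seq 0 M).
Proof.
  intros Hq Hg HM. unfold range_half.
  eapply Rle_trans. apply lsum_filter. intros; apply Hg.
  rewrite lsum_map. replace M with (Z.to_nat (2*q+1) + (M - Z.to_nat (2*q+1)))%nat by lia.
  rewrite seq_app, lsum_app.
  assert (0 <= lsum (fun k : nat => g (Z.of_nat k - q)%Z) (seq (0 + Z.to_nat (2 * q + 1)) (M - Z.to_nat (2 * q + 1))))
    by (apply lsum_nonneg; intros; apply Hg).
  lra.
Qed.

Lemma count_lsum (W : list Z) r c :
  lsum (fun s' => if Z.eq_dec s' r then c else 0) W = c * INR (count_occ Z.eq_dec W r).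
Proof. induction W; [unfold lsum; simpl; ring|]. rewrite lsum_cons, IHW. simpl.
  destruct (Z.eq_dec a r); [rewrite S_INR|]; ring. Qed.

Lemma count_le1 (W : list Z) r : NoDup W -> INR (count_occ Z.eq_dec W r) <= 1.
Proof. intros H. apply (NoDup_count_occ Z.eq_dec) with (x := r) in H. apply le_INR in H. simpl in H. lra. Qed.

Lemma first_count W b q c : (0 < q)%Z -> 0 <= c -> NoDup W -> (forall s, In s W -> (0 <= s < q)%Z) ->
  Z.gcd b q = 1%Z ->
  lsum (fun s => lsum (fun s' => if ((b*(s-s')) mod q =? 0)%Z then c else 0) W) W <= c * INR (length W).
Proof.
  intros Hq Hc HN HW Hg.
  rewrite <- lsum_const. apply lsum_le; intros s Hs.
  eapply Rle_trans with (lsum (fun s' => if Z.eq_dec s' s then c else 0) W).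
  - apply lsum_le; intros s' Hs'.
    destruct (Z.eqb_spec ((b*(s-s')) mod q) 0) as [E|E]; destruct (Z.eq_dec s' s); try lra.
    exfalso. apply Z.mod_divide in E; [|lia].
    apply Z.gauss in E. 2: { rewrite Z.gcd_comm; auto. }
    destruct E as [k Hk]. pose proof (HW s Hs). pose proof (HW s' Hs').
    assert (k = 0)%Z by (destruct (Z_lt_le_dec k 0); [nia| destruct (Z_lt_le_dec 0 k); nia]).
    subst k. lia.
  - rewrite count_lsum. pose proof (count_le1 W s HN). nra.
Qed.

Lemma second_count W b p q c : (0 < p)%Z -> (q < 2*p)%Z -> 0 <= c -> NoDup W -> (forall s, In s W -> (0 <= s < q)%Z) ->
  Z.gcd b p = 1%Z ->
  lsum (fun s => lsum (fun s' => if ((b*(s-s')) mod p =? 0)%Z then c else 0) W) W <= 2 * c * INR (length W).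
Proof.
  intros Hp Hqp Hc HN HW Hg.
  rewrite <- lsum_const. apply lsum_le; intros s Hs.
  eapply Rle_trans with (lsum (fun s' => (if Z.eq_dec s' (s mod p) then c else 0)
                                       + (if Z.eq_dec s' (s mod p + p) then c else 0)) W).
  - apply lsum_le; intros s' Hs'.
    destruct (Z.eqb_spec ((b*(s-s')) mod p) 0) as [E|E];
      destruct (Z.eq_dec s' (s mod p)); destruct (Z.eq_dec s' (s mod p + p)); try lra.
    exfalso. apply Z.mod_divide in E; [|lia].
    apply Z.gauss in E. 2: { rewrite Z.gcd_comm; auto. }
    destruct E as [k Hk]. pose proof (HW s Hs). pose proof (HW s' Hs').
    pose proof (Z_div_mod_eq_full s p). pose proof (Z.mod_pos_bound s p Hp).
    set (r := (s mod p)%Z) in *. set (u := (s / p)%Z) in *.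
    assert (Ht : (s' - r = p * (u - k))%Z) by lia.
    assert (u - k = 0 \/ u - k = 1)%Z as [T|T]
      by (destruct (Z_lt_le_dec (u-k) 0); [nia| destruct (Z_lt_le_dec 1 (u-k)); nia]);
      rewrite T in Ht; lia.
  - rewrite lsum_plus, !count_lsum. pose proof (count_le1 W (s mod p) HN).
    pose proof (count_le1 W (s mod p + p) HN). nra.
Qed.

Lemma INR_nm (n : nat) m : (0 <= m)%Z -> INR (n * Z.to_nat m) = INR n * IZR m.
Proof. intros. rewrite mult_INR, (INR_IZR_INZ (Z.to_nat m)), Z2Nat.id; auto. Qed.

Theorem corollary2 :
  exists c : R, 0 < c /\
    forall (q p : Z) (W : list Z) (b1 b2 : Z),
      (0 < q)%Z -> (0 < p)%Z ->
      (q < 2 * p)%Z -> (p < 2 * q)%Z ->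
      NoDup W -> (forall s, In s W -> (0 <= s < q)%Z) ->
      Z.gcd b1 q = 1%Z -> Z.gcd b2 p = 1%Z ->
      corr_sum W q p b1 b2 <= c * IZR q * INR (length W).
Proof.
  exists 10. split; [lra|].
  intros q p W b1 b2 Hq Hp Hqp Hpq HN HW G1 G2.
  set (A1 := fun a => abs_fW W (IZR (b1 * a) / IZR q)).
  set (A2 := fun a => abs_fW W (IZR (b2 * a) / IZR p)).
  change (corr_sum W q p b1 b2) with (lsum (fun a => A1 a * A2 a) (range_half q)).
  assert (Hnn : forall t, 0 <= abs_fW W t) by (intros; apply sqrt_pos).
  assert (S1 : lsum (fun a => A1 a ^ 2) (range_half q) <= 3 * IZR q * INR (length W)).
  { eapply Rle_trans. apply (range_bound (fun a => A1 a ^ 2) q (3 * Z.to_nat q)); auto.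
    intros; apply pow2_ge_0. lia.
    unfold A1. rewrite factor_eq by auto.
    eapply Rle_trans. apply first_count; eauto. apply pos_INR.
    rewrite INR_nm by lia. simpl. lra. }
  assert (S2 : lsum (fun a => A2 a ^ 2) (range_half q) <= 8 * IZR p * INR (length W)).
  { eapply Rle_trans. apply (range_bound (fun a => A2 a ^ 2) q (4 * Z.to_nat p)); auto.
    intros; apply pow2_ge_0. lia.
    unfold A2. rewrite factor_eq by auto.
    eapply Rle_trans. apply (second_count W b2 p q); auto. apply pos_INR.
    rewrite INR_nm by lia. simpl. lra. }
  assert (Hpq' : IZR p <= 2 * IZR q) by (rewrite <- mult_IZR; apply IZR_le; lia).
  assert (HL := pos_INR (length W)).
  eapply Rle_trans with (lsum (fun a => / 2 * (A1 a ^ 2 + A2 a ^ 2)) (range_half q)).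
  - apply lsum_le; intros a _. pose proof (pow2_ge_0 (A1 a - A2 a)). nra.
  - rewrite lsum_scal, lsum_plus.
    assert (8 * IZR p * INR (length W) <= 16 * IZR q * INR (length W)) by (apply Rmult_le_compat_r; lra).
    assert (0 <= IZR q * INR (length W)) by (apply Rmult_le_pos; [apply IZR_le; lia | lra]).
    lra.
Qed.
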